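(* Let $\{G_\alpha\}_{\alpha\in\Lambda}$ be a family of partially ordered abelian groups, $G=\bigoplus_\alpha G_\alpha$ with the product order, $\{n_\alpha\}_{\alpha\in\Lambda}$ nonnegative integers with $N=\sup_\alpha n_\alpha<\infty$. Then: (i) if each $G_\alpha$ is $n_\alpha$-atomic, then $G$ is $N$-atomic; (ii) if each $G_\alpha$ is $n_\alpha$-antimatter, then $G$ is $N$-antimatter.
   Context: A po-group is an abelian group with a translation-invariant partial order; $G^+=\{g:0\le g\}$; product order on a direct sum is componentwise. An atom is a minimal element of $G^+\setminus\{0\}$; $A(G)$ is the subgroup generated by atoms; $Q(G)$ is the subgroup generated by $\{g\in G^+:\exists h\in G^+,\ g+h\in A(G)\}$ (a convex subgroup, so $G/Q(G)$ is a po-group under the induced order $a+Q\le b+Q$ iff $\alpha\le\beta$ for some representatives). Quasi-atomic quotient sequence: $G_0=G$, $G_{n+1}=G_n/Q(G_n)$. $G$ is $n$-atomic if $n$ is the least nonnegative integer with $G_m=0$ for all $m\ge n$. $G$ is $n$-antimatter if $n$ is the least nonnegative integer such that $G_n\ne0$ and $Q(G_n)=0$ (equivalently $G_m=G_n$ for all $m\ge n$). *)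

(* Defs.v *)
From Stdlib Require Import List Arith ClassicalEpsilon.
Import ListNotations.

(** A po-group presented as raw data; the axioms are the separate predicate
    [is_pogroup]. *)
Record poGroup := PoGroup {
  car  : Type;
  zero : car;
  add  : car -> car -> car;
  opp  : car -> car;
  le   : car -> car -> Prop
}.

Arguments zero {p}.
Arguments add {p} _ _.
Arguments opp {p} _.
Arguments le {p} _ _.

Definition is_pogroup (G : poGroup) : Prop :=
  (forall x y z : car G, add x (add y z) = add (add x y) z) /\
  (forall x y : car G, add x y = add y x) /\
  (forall x : car G, add zero x = x) /\
  (forall x : car G, add (opp x) x = zero) /\
  (forall x : car G, le x x) /\
  (forall x y : car G, le x y -> le y x -> x = y) /\
  (forall x y z : car G, le x y -> le y z -> le x z) /\
  (forall x y z : car G, le x y -> le (add x z) (add y z)).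

Section PoGroupNotions.
Variable G : poGroup.

Definition pos (g : car G) : Prop := le zero g.

Definition atom (a : car G) : Prop :=
  pos a /\ a <> zero /\
  (forall b, pos b -> b <> zero -> le b a -> b = a).

Inductive gen (S : car G -> Prop) : car G -> Prop :=
| gen_base : forall x, S x -> gen S x
| gen_zero : gen S zero
| gen_add  : forall x y, gen S x -> gen S y -> gen S (add x y)
| gen_opp  : forall x, gen S x -> gen S (opp x).

Definition Asub : car G -> Prop := gen atom.

Definition Qsub : car G -> Prop :=
  gen (fun g => pos g /\ exists h, pos h /\ Asub (add g h)).

Definition trivial : Prop := forall x : car G, x = zero.

Definition zero_sub (H : car G -> Prop) : Prop := forall x, H x -> x = zero.

End PoGroupNotions.

Arguments pos {G} _.
Arguments atom {G} _.
Arguments Asub {G} _.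
Arguments Qsub {G} _.

(** Quotient G/H: its elements are the cosets x + H, as subsets of G. *)
Section Quotient.
Variables (G : poGroup) (H : car G -> Prop).

Definition coset (a : car G) : car G -> Prop := fun x => H (add x (opp a)).

Definition qcar : Type := { P : car G -> Prop | exists a, P = coset a }.

Definition qmk (a : car G) : qcar := exist _ (coset a) (ex_intro _ a eq_refl).

Definition qrep (P : qcar) : car G :=
  proj1_sig (constructive_indefinite_description _ (proj2_sig P)).

Definition qle (P R : qcar) : Prop :=
  exists alpha beta, proj1_sig P alpha /\ proj1_sig R beta /\ le alpha beta.

Definition quot : poGroup :=
  {| car := qcar;
     zero := qmk zero;
     add := fun P R => qmk (add (qrep P) (qrep R));
     opp := fun P => qmk (opp (qrep P));
     le := qle |}.
End Quotient.

Fixpoint qseq (G : poGroup) (n : nat) : poGroup :=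
  match n with
  | O => G
  | S m => quot (qseq G m) (@Qsub (qseq G m))
  end.

Definition n_atomic (G : poGroup) (n : nat) : Prop :=
  (forall m, n <= m -> trivial (qseq G m)) /\
  (forall k, (forall m, k <= m -> trivial (qseq G m)) -> n <= k).

Definition n_antimatter (G : poGroup) (n : nat) : Prop :=
  (~ trivial (qseq G n) /\ zero_sub (qseq G n) (@Qsub (qseq G n))) /\
  (forall k, ~ trivial (qseq G k) /\ zero_sub (qseq G k) (@Qsub (qseq G k)) ->
             n <= k).

Section DirectSum.
Variables (I : Type) (G : I -> poGroup) (HG : forall i, is_pogroup (G i)).

Definition finsupp (f : forall i, car (G i)) : Prop :=
  exists l : list I, forall i, ~ In i l -> f i = zero.

Definition dcar : Type := { f : forall i, car (G i) | finsupp f }.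

Lemma add_zero_zero i : add (zero : car (G i)) zero = zero.
Proof. destruct (HG i) as (_ & _ & H0 & _). apply H0. Qed.

Lemma opp_zero i : opp (zero : car (G i)) = zero.
Proof.
  destruct (HG i) as (_ & Hc & H0 & Hi & _).
  rewrite <- (Hi zero) at 2. rewrite Hc, H0. reflexivity.
Qed.

Definition dzero : dcar :=
  exist _ (fun i => zero) (ex_intro _ nil (fun i _ => eq_refl)).

Lemma finsupp_add (f g : dcar) :
  finsupp (fun i => add (proj1_sig f i) (proj1_sig g i)).
Proof.
  destruct f as [f [l1 H1]], g as [g [l2 H2]]; simpl.
  exists (l1 ++ l2). intros i Hi.
  rewrite H1, H2; [apply add_zero_zero | |];
    intro; apply Hi, in_or_app; auto.
Qed.

Lemma finsupp_opp (f : dcar) : finsupp (fun i => opp (proj1_sig f i)).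
Proof.
  destruct f as [f [l H]]; simpl. exists l. intros i Hi.
  rewrite H by exact Hi. apply opp_zero.
Qed.

Definition dsum : poGroup :=
  {| car := dcar;
     zero := dzero;
     add := fun f g => exist _ _ (finsupp_add f g);
     opp := fun f => exist _ _ (finsupp_opp f);
     le := fun f g => forall i, le (proj1_sig f i) (proj1_sig g i) |}.
End DirectSum.

Definition is_sup {I : Type} (n : I -> nat) (N : nat) : Prop :=
  (forall i, n i <= N) /\ (forall M, (forall i, n i <= M) -> N <= M).

(* Main.v *)
Require Import Defs.
From Stdlib Require Import List Arith ClassicalEpsilon.
From Stdlib Require Import Classical ProofIrrelevance FunctionalExtensionality PropExtensionality.
From Stdlib Require Import ssreflect.

Existing Class is_pogroup.
Section Grp.
Context {G : poGroup}.
Context {HG : is_pogroup G}.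
Implicit Types x y z a b c d : car G.

Lemma addA x y z : add x (add y z) = add (add x y) z.
Proof. destruct HG as (h&_); apply h. Qed.
Lemma addC x y : add x y = add y x.
Proof. destruct HG as (_&h&_); apply h. Qed.
Lemma add0l x : add zero x = x.
Proof. destruct HG as (_&_&h&_); apply h. Qed.
Lemma addNl x : add (opp x) x = zero.
Proof. destruct HG as (_&_&_&h&_); apply h. Qed.
Lemma le_refl x : le x x.
Proof. destruct HG as (_&_&_&_&h&_); apply h. Qed.
Lemma le_anti x y : le x y -> le y x -> x = y.
Proof. destruct HG as (_&_&_&_&_&h&_); apply h. Qed.
Lemma le_trans x y z : le x y -> le y z -> le x z.
Proof. destruct HG as (_&_&_&_&_&_&h&_); apply h. Qed.
Lemma le_add x y z : le x y -> le (add x z) (add y z).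
Proof. destruct HG as (_&_&_&_&_&_&_&h); apply h. Qed.
Lemma add0r x : add x zero = x.
Proof. rewrite addC; apply add0l. Qed.
Lemma addNr x : add x (opp x) = zero.
Proof. rewrite addC; apply addNl. Qed.
Lemma addK x y : add (add x y) (opp y) = x.
Proof. rewrite -addA addNr add0r; auto. Qed.
Lemma addKl x y : add (opp x) (add x y) = y.
Proof. rewrite addA addNl add0l; auto. Qed.
Lemma add_cancel x y z : add x z = add y z -> x = y.
Proof. intro E. rewrite -(addK x z) E addK. auto. Qed.
Lemma opp_unique x y : add x y = zero -> y = opp x.
Proof. intro E. apply (add_cancel _ _ x). rewrite addC E addNl. auto. Qed.
Lemma opp_opp x : opp (opp x) = x.
Proof. symmetry. apply opp_unique. apply addNl. Qed.
Lemma opp0 : opp (zero : car G) = zero.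
Proof. symmetry. apply opp_unique. apply add0l. Qed.
Lemma addCA x y z : add x (add y z) = add y (add x z).
Proof. rewrite !addA (addC x y). auto. Qed.
Lemma addAC x y z : add (add x y) z = add (add x z) y.
Proof. rewrite -!addA (addC y z). auto. Qed.
Lemma addACA a b c d : add (add a b) (add c d) = add (add a c) (add b d).
Proof. rewrite -!addA (addCA b c d). auto. Qed.
Lemma opp_add x y : opp (add x y) = add (opp x) (opp y).
Proof. symmetry. apply opp_unique. rewrite addACA !addNr add0l. auto. Qed.
Lemma sub_eq0 x y : add x (opp y) = zero -> x = y.
Proof. intro E. apply (add_cancel _ _ (opp y)). rewrite E addNr. auto. Qed.
Lemma subrr x : add x (opp x) = zero.
Proof. apply addNr. Qed.
Lemma sub_tele x y z : add (add x (opp y)) (add y (opp z)) = add x (opp z).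
Proof. rewrite -addA addKl. auto. Qed.
Lemma sub_addD a b c d : add (add a b) (opp (add c d)) = add (add a (opp c)) (add b (opp d)).
Proof. rewrite opp_add addACA. auto. Qed.
Lemma opp_sub x y : opp (add x (opp y)) = add y (opp x).
Proof. rewrite opp_add opp_opp addC. auto. Qed.
Lemma pos_add x y : pos x -> pos y -> pos (add x y).
Proof. unfold pos; intros Hx Hy. apply le_trans with y; auto.
  rewrite -{1}(add0l y). apply le_add; auto. Qed.
Lemma le_pos x y : le x y -> pos (add y (opp x)).
Proof. intro h. unfold pos. rewrite -(addNr x). apply le_add; auto. Qed.
Lemma pos_le x y : pos (add y (opp x)) -> le x y.
Proof. unfold pos. intro h. apply le_add with (z:=x) in h. rewrite add0l addAC addK in h. exact h. Qed.
Lemma pos0 : pos (zero : car G).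
Proof. apply le_refl. Qed.

Section GenL.
Variable S : car G -> Prop.
Lemma gen_sub x y : gen G S x -> gen G S y -> gen G S (add x (opp y)).
Proof. intros; apply gen_add; auto; apply gen_opp; auto. Qed.
Lemma gen_refl x : gen G S (add x (opp x)).
Proof. rewrite subrr. apply gen_zero. Qed.
Lemma gen_sym x y : gen G S (add x (opp y)) -> gen G S (add y (opp x)).
Proof. intro h. rewrite -opp_sub. apply gen_opp; auto. Qed.
Lemma gen_trans x y z : gen G S (add x (opp y)) -> gen G S (add y (opp z)) -> gen G S (add x (opp z)).
Proof. intros. rewrite -(sub_tele x y z). apply gen_add; auto. Qed.
Lemma gen_addc a b c d : gen G S (add a (opp c)) -> gen G S (add b (opp d)) -> gen G S (add (add a b) (opp (add c d))).
Proof. intros. rewrite sub_addD. apply gen_add; auto. Qed.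
Lemma gen_oppc a c : gen G S (add a (opp c)) -> gen G S (add (opp a) (opp (opp c))).
Proof. intros. rewrite -opp_add. apply gen_opp; auto. Qed.
End GenL.
End Grp.

Section Quot.
Context {G : poGroup} {HG : is_pogroup G}.
Variable S : car G -> Prop.
Local Notation H := (gen G S).
Local Notation QG := (quot G (gen G S)).
Local Notation mk := (qmk G (gen G S)).
Local Notation rep := (qrep G (gen G S)).

Lemma qrep_spec (P : qcar G H) : proj1_sig P = coset G H (rep P).
Proof. unfold qrep. destruct (constructive_indefinite_description _ _) as [a Ha]. exact Ha. Qed.

Lemma qcar_eq (P R : qcar G H) : proj1_sig P = proj1_sig R -> P = R.
Proof. destruct P as [P hP], R as [R hR]; simpl; intro E; subst R. f_equal. apply proof_irrelevance. Qed.

Lemma qmk_rep (P : qcar G H) : P = mk (rep P).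
Proof. apply qcar_eq. rewrite qrep_spec. reflexivity. Qed.

Lemma qmk_eq a b : mk a = mk b <-> H (add a (opp b)).
Proof. split.
- intro E. have E' : coset G H a = coset G H b by exact (f_equal (@proj1_sig _ _) E).
  have h : coset G H a a by (unfold coset; apply gen_refl).
  rewrite E' in h. exact h.
- intro h. apply qcar_eq. simpl. apply functional_extensionality => x.
  apply propositional_extensionality. unfold coset. split => hx.
  + exact (gen_trans _ _ _ _ hx h).
  + apply (gen_trans _ _ _ _ hx). by apply gen_sym.
Qed.

Lemma qrep_qmk a : H (add (rep (mk a)) (opp a)).
Proof. apply qmk_eq. by rewrite -qmk_rep. Qed.

Lemma qmk_surj (P : qcar G H) : exists a, P = mk a.
Proof. exists (rep P). apply qmk_rep. Qed.

Lemma qadd_mk a b : @add QG (mk a) (mk b) = mk (add a b).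
Proof. simpl. apply qmk_eq. apply gen_addc; apply qrep_qmk. Qed.

Lemma qopp_mk a : @opp QG (mk a) = mk (opp a).
Proof. simpl. apply qmk_eq. apply gen_oppc; apply qrep_qmk. Qed.

Lemma qzero_mk : @zero QG = mk zero.
Proof. reflexivity. Qed.

Lemma qle_mk a b : @le QG (mk a) (mk b) <-> exists al be, H (add al (opp a)) /\ H (add be (opp b)) /\ le al be.
Proof. reflexivity. Qed.

Lemma qle_mk_intro a b : le a b -> @le QG (mk a) (mk b).
Proof. intro h. apply qle_mk. exists a, b. split; [|split]; auto; apply gen_refl. Qed.

Hypothesis Hconv : forall g h, pos g -> pos h -> H (add g h) -> H g.

Lemma quot_pogroup : is_pogroup QG.
Proof.
  have ind1 : forall (P : car QG) (Pr : car QG -> Prop), (forall a, Pr (mk a)) -> Pr P.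
  { intros P Pr hP. destruct (qmk_surj P) as [a ->]. apply hP. }
  repeat split.
  - intros x y z. apply (ind1 x) => a. apply (ind1 y) => b. apply (ind1 z) => c.
    rewrite !qadd_mk addA. reflexivity.
  - intros x y. apply (ind1 x) => a. apply (ind1 y) => b. by rewrite !qadd_mk addC.
  - intros x. apply (ind1 x) => a. by rewrite qzero_mk qadd_mk add0l.
  - intros x. apply (ind1 x) => a. by rewrite qopp_mk qadd_mk addNl.
  - intros x. apply (ind1 x) => a. apply qle_mk_intro. apply le_refl.
  - intros x y. apply (ind1 x) => a. apply (ind1 y) => b.
    move=> /qle_mk [al [be [ha [hb hab]]]] /qle_mk [be' [al' [hb' [ha' hba]]]].
    apply qmk_eq.
    have hg : pos (add be (opp al)) by apply le_pos.
    have hh : pos (add al' (opp be')) by apply le_pos.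
    have hgh : H (add (add be (opp al)) (add al' (opp be'))).
    { rewrite addACA (addC (opp al)) -addACA. apply gen_add.
      - apply (gen_trans _ _ b); auto. by apply gen_sym.
      - apply (gen_trans _ _ a); auto. by apply gen_sym. }
    have hg' := Hconv _ _ hg hh hgh.
    (* a - b = (a - al) + (al - be) + (be - b) *)
    apply (gen_trans _ _ al). by apply gen_sym.
    apply (gen_trans _ _ be); auto.
    rewrite -opp_sub. by apply gen_opp.
  - intros x y z. apply (ind1 x) => a. apply (ind1 y) => b. apply (ind1 z) => c.
    move=> /qle_mk [al [be [ha [hb hab]]]] /qle_mk [be' [ga [hb' [hc hbg]]]].
    apply qle_mk. exists (add al (add be' (opp be))), ga. split; [|split]; auto.
    + apply (gen_trans _ _ al); [| auto]. rewrite (addC al) addK.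
      apply (gen_trans _ _ b); auto. by apply gen_sym.
    + apply (le_trans _ be'); auto.
      have e : add be (add be' (opp be)) = be' by rewrite addCA addNr add0r.
      rewrite -{2}e. by apply le_add.
  - intros x y z. apply (ind1 x) => a. apply (ind1 y) => b. apply (ind1 z) => c.
    rewrite !qadd_mk. move=> /qle_mk [al [be [ha [hb hab]]]].
    apply qle_mk. exists (add al c), (add be c). split; [|split].
    + rewrite sub_addD subrr add0r. auto.
    + rewrite sub_addD subrr add0r. auto.
    + by apply le_add.
Qed.
End Quot.

Section QConv.
Context {G : poGroup} {HG : is_pogroup G}.
Definition Sgen (g : car G) : Prop := pos g /\ exists h, pos h /\ Asub (add g h).

Lemma Qsub_gen (x : car G) : Qsub x = gen G Sgen x.
Proof. reflexivity. Qed.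

Lemma Sgen0 : Sgen zero.
Proof. split. apply pos0. exists zero. split. apply pos0. rewrite add0l. apply gen_zero. Qed.

Lemma Sgen_add (x y : car G) : Sgen x -> Sgen y -> Sgen (add x y).
Proof. move=> [px [h1 [ph1 a1]]] [py [h2 [ph2 a2]]]. split. by apply pos_add.
  exists (add h1 h2). split. by apply pos_add. rewrite addACA. by apply gen_add. Qed.

Lemma Sgen_down (g s : car G) : pos g -> le g s -> Sgen s -> Sgen g.
Proof. move=> pg gs [ps [h [ph a]]]. split; auto. exists (add (add s (opp g)) h). split.
  apply pos_add; auto. by apply le_pos.
  have e : add g (add (add s (opp g)) h) = add s h by rewrite addA addCA addNr add0r.
  by rewrite e. Qed.

Lemma Qsub_diff (x : car G) : Qsub x -> exists s1 s2, Sgen s1 /\ Sgen s2 /\ x = add s1 (opp s2).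
Proof. rewrite Qsub_gen. elim.
- intros y hy. exists y, zero. split; [|split]; auto. apply Sgen0. by rewrite opp0 add0r.
- exists zero, zero. split; [|split]; try apply Sgen0. by rewrite subrr.
- move=> y z _ [a1 [a2 [h1 [h2 ->]]]] _ [b1 [b2 [k1 [k2 ->]]]].
  exists (add a1 b1), (add a2 b2). split; [|split]; try by apply Sgen_add.
  by rewrite sub_addD.
- move=> y _ [a1 [a2 [h1 [h2 ->]]]]. exists a2, a1. split; [|split]; auto. by rewrite opp_sub.
Qed.

Lemma le_sub_pos (x y : car G) : pos y -> le (add x (opp y)) x.
Proof. move=> py. apply pos_le. rewrite opp_sub addCA addNr add0r. exact py. Qed.

Lemma le_add_pos (x y : car G) : pos y -> le x (add x y).
Proof. move=> py. apply pos_le. by rewrite addC addKl. Qed.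

Lemma Q_conv (g h : car G) : pos g -> pos h -> Qsub (add g h) -> Qsub g.
Proof. move=> pg ph /Qsub_diff [s1 [s2 [h1 [h2 e]]]].
  apply gen_base. apply (Sgen_down g s1); auto.
  apply (le_trans _ (add g h)). by apply le_add_pos.
  rewrite e. apply le_sub_pos. apply h2.
Qed.

Lemma Qquot_pogroup : is_pogroup (quot G (@Qsub G)).
Proof. apply (@quot_pogroup G HG Sgen). exact Q_conv. Qed.
End QConv.

Lemma qseq_pogroup (G : poGroup) (HG : is_pogroup G) m : is_pogroup (qseq G m).
Proof. elim: m => [|m IH] //=. by apply (@Qquot_pogroup _ IH). Qed.

Record Decomp {D : poGroup} {I : Type} {G : I -> poGroup} (phi : car D -> forall i, car (G i)) : Prop := {
  d_add : forall x y i, phi (add x y) i = add (phi x i) (phi y i);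
  d_inj : forall x y, (forall i, phi x i = phi y i) -> x = y;
  d_fin : forall x, exists l, forall i, ~ In i l -> phi x i = zero;
  d_surj : forall f : (forall i, car (G i)), (exists l, forall i, ~ In i l -> f i = zero) -> exists x, forall i, phi x i = f i;
  d_le : forall x y, le x y <-> forall i, le (phi x i) (phi y i) }.

Section Dec.
Context {D : poGroup} {HD : is_pogroup D} {I : Type} {G : I -> poGroup} {HG : forall i, is_pogroup (G i)}.
Variable phi : car D -> forall i, car (G i).
Hypothesis Hd : Decomp phi.

Lemma d_zero i : phi zero i = zero.
Proof. apply (add_cancel _ _ (phi zero i)). by rewrite -(d_add _ Hd) add0l add0l. Qed.

Lemma d_opp x i : phi (opp x) i = opp (phi x i).
Proof. apply opp_unique. by rewrite -(d_add _ Hd) addNr d_zero. Qed.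

Lemma d_sub x y i : phi (add x (opp y)) i = add (phi x i) (opp (phi y i)).
Proof. by rewrite (d_add _ Hd) d_opp. Qed.

Lemma d_pos x : pos x <-> forall i, pos (phi x i).
Proof. unfold pos. rewrite (d_le _ Hd). split => h i; move: (h i); by rewrite d_zero. Qed.

Lemma d_eq0 x : (forall i, phi x i = zero) -> x = zero.
Proof. move=> h. apply (d_inj _ Hd) => i. by rewrite h d_zero. Qed.

Definition single (x : car D) (i : I) (y : car (G i)) : Prop :=
  phi x i = y /\ forall j, j <> i -> phi x j = zero.

Lemma single_ex i (y : car (G i)) : exists x, single x i y.
Proof.
  pose f := fun j => match excluded_middle_informative (i = j) with
                     | left e => eq_rect i (fun k => car (G k)) y j e
                     | right _ => zero end.
  destruct ((d_surj _ Hd) f) as [x hx].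
  { exists (i :: nil) => j hj. unfold f. destruct (excluded_middle_informative (i = j)) as [e|ne]; auto.
    exfalso. apply hj. left. exact e. }
  exists x. split.
  - rewrite hx. unfold f. destruct (excluded_middle_informative (i = i)) as [e|ne].
    + by rewrite (proof_irrelevance _ e eq_refl).
    + by case: ne.
  - move=> j ne. rewrite hx. unfold f. destruct (excluded_middle_informative (i = j)) as [e|ne']; auto.
    by case: ne.
Qed.

Lemma single_eq x x' i y : single x i y -> single x' i y -> x = x'.
Proof. move=> [h1 h2] [k1 k2]. apply (d_inj _ Hd) => j.
  destruct (classic (j = i)) as [->|ne]. by rewrite h1 k1. by rewrite h2 // k2. Qed.

Lemma single_add x x' i y y' : single x i y -> single x' i y' -> single (add x x') i (add y y').
Proof. move=> [h1 h2] [k1 k2]. split. by rewrite (d_add _ Hd) h1 k1.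
  move=> j ne. by rewrite (d_add _ Hd) h2 // k2 // add0l. Qed.

Lemma single_opp x i y : single x i y -> single (opp x) i (opp y).
Proof. move=> [h1 h2]. split. by rewrite d_opp h1.
  move=> j ne. by rewrite d_opp h2 // opp0. Qed.

Lemma single_zero x i : single x i zero -> x = zero.
Proof. move=> [h1 h2]. apply d_eq0 => j. destruct (classic (j = i)) as [->|ne]; auto. Qed.

Lemma single_pos x i y : single x i y -> pos y -> pos x.
Proof. move=> [h1 h2] py. apply d_pos => j. destruct (classic (j = i)) as [->|ne].
  by rewrite h1. rewrite h2 //. apply pos0. Qed.

Lemma single_gen (SD : car D -> Prop) i (SG : car (G i) -> Prop) :
  (forall y x, SG y -> single x i y -> gen D SD x) ->
  forall y, gen (G i) SG y -> forall x, single x i y -> gen D SD x.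
Proof. move=> hb y00. elim.
  - move=> y0 hy x hx. by apply (hb y0).
  - move=> x hx. rewrite (single_zero _ _ hx). apply gen_zero.
  - move=> y1 y2 _ IH1 _ IH2 x hx. destruct (single_ex i y1) as [s1 hs1]. destruct (single_ex i y2) as [s2 hs2].
    rewrite (single_eq _ _ _ _ hx (single_add _ _ _ _ _ hs1 hs2)). apply gen_add; auto.
  - move=> y _ IH x hx. destruct (single_ex i y) as [s hs].
    rewrite (single_eq _ _ _ _ hx (single_opp _ _ _ hs)). apply gen_opp; auto.
Qed.

Lemma gen_phi (SD : car D -> Prop) (SG : forall i, car (G i) -> Prop) :
  (forall x, SD x -> forall i, gen (G i) (SG i) (phi x i)) ->
  forall x, gen D SD x -> forall i, gen (G i) (SG i) (phi x i).
Proof. move=> hb x00. elim.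
  - by [].
  - move=> i. rewrite d_zero. apply gen_zero.
  - move=> x y _ IH1 _ IH2 i. rewrite (d_add _ Hd). apply gen_add; auto.
  - move=> x _ IH i. rewrite d_opp. apply gen_opp; auto.
Qed.

Lemma phi_gen (SD : car D -> Prop) (SG : forall i, car (G i) -> Prop) :
  (forall i y x, SG i y -> single x i y -> gen D SD x) ->
  forall x, (forall i, gen (G i) (SG i) (phi x i)) -> gen D SD x.
Proof. move=> hb x hx. destruct ((d_fin _ Hd) x) as [l hl]. move: x hx hl. elim: l.
  - move=> x _ hl. have -> : x = zero by apply d_eq0 => i; apply hl; auto.
    apply gen_zero.
  - move=> a l IH x hx hl. destruct (single_ex a (phi x a)) as [s hs].
    have e : x = add (add x (opp s)) s by rewrite addAC addK.
    rewrite e. apply gen_add.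
    + apply IH.
      * move=> i. rewrite d_sub. destruct (classic (i = a)) as [->|ne].
        -- rewrite (proj1 hs) subrr. apply gen_zero.
        -- rewrite (proj2 hs i ne) opp0 add0r. auto.
      * move=> i ni. rewrite d_sub. destruct (classic (i = a)) as [->|ne].
        -- by rewrite (proj1 hs) subrr.
        -- rewrite (proj2 hs i ne) opp0 add0r. apply hl. move=> [h|h]; auto.
    + apply (single_gen SD a (SG a)) with (y := phi x a); auto. move=> y z hy hz. by apply (hb a y z).
Qed.

Lemma d_atom a : atom a -> forall i, phi a i = zero \/ atom (phi a i).
Proof. rewrite /atom. move=> [pa [nza ma]] i. destruct (classic (phi a i = zero)) as [z|nz]; [by left|right].
  split; [|split]; auto. by apply (proj1 (d_pos a)).
  move=> c pc nzc lc. destruct (single_ex i c) as [t ht].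
  have : t = a.
  { apply ma. by apply (single_pos _ _ _ ht). move=> et. apply nzc. rewrite -(proj1 ht) et d_zero //.
    apply (d_le _ Hd) => j. destruct (classic (j = i)) as [->|ne]. by rewrite (proj1 ht).
    rewrite (proj2 ht j ne). by apply (proj1 (d_pos a)). }
  move=> eta. by rewrite -(proj1 ht) eta.
Qed.

Lemma single_atom x i y : atom y -> single x i y -> atom x.
Proof. rewrite /atom. move=> [py [nzy my]] hs. split; [|split].
  - by apply (single_pos _ _ _ hs).
  - move=> ex. apply nzy. by rewrite -(proj1 hs) ex d_zero.
  - move=> b pb nzb lb. have pbj := proj1 (d_pos b) pb. have lbj := proj1 (d_le _ Hd b x) lb.
    have hj : forall j, j <> i -> phi b j = zero.
    { move=> j ne. apply le_anti; [|apply pbj]. have := lbj j. by rewrite (proj2 hs j ne). }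
    have hi : phi b i = y.
    { apply my; auto. move=> e. apply nzb. apply d_eq0 => j. destruct (classic (j = i)) as [->|ne]; auto.
      rewrite -(proj1 hs). auto. }
    apply (single_eq _ _ i y); auto. split; auto.
Qed.

Lemma d_Asub x : Asub x <-> forall i, Asub (phi x i).
Proof. split.
  - apply (gen_phi atom (fun i => atom)). move=> a ha i. destruct (d_atom a ha i) as [->|h].
    apply gen_zero. by apply gen_base.
  - apply (phi_gen atom (fun i => atom)). move=> i y z hy hz. apply gen_base. by apply (single_atom z i y).
Qed.

Lemma d_Qsub x : Qsub x <-> forall i, Qsub (phi x i).
Proof. split.
  - apply (gen_phi Sgen (fun i => Sgen)). move=> a [pa [h [ph ha]]] i. apply gen_base. split.
    by apply (proj1 (d_pos a)). exists (phi h i). split. by apply (proj1 (d_pos h)).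
    rewrite -(d_add _ Hd). by apply (proj1 (d_Asub _)).
  - apply (phi_gen Sgen (fun i => Sgen)). move=> i y z [py [h [ph ha]]] hz. apply gen_base.
    destruct (single_ex i h) as [sh hsh]. split. by apply (single_pos _ _ _ hz).
    exists sh. split. by apply (single_pos _ _ _ hsh).
    apply (single_gen atom i atom) with (y := add y h); auto.
    + move=> y' x' hy' hx'. apply gen_base. by apply (single_atom x' i y').
    + by apply single_add.
Qed.

Lemma d_trivial : trivial D <-> forall i, trivial (G i).
Proof. split.
  - move=> h i y. destruct (single_ex i y) as [x hx]. by rewrite -(proj1 hx) (h x) d_zero.
  - move=> h x. apply d_eq0 => i. apply h.
Qed.

Lemma d_zsub : zero_sub D (@Qsub D) <-> forall i, zero_sub (G i) (@Qsub (G i)).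
Proof. split.
  - move=> h i y hy. destruct (single_ex i y) as [x hx]. rewrite -(proj1 hx) (h x) ?d_zero //.
    apply d_Qsub => j. destruct (classic (j = i)) as [->|ne]. by rewrite (proj1 hx).
    rewrite (proj2 hx j ne). apply gen_zero.
  - move=> h x hx. apply d_eq0 => i. apply h. by apply d_Qsub.
Qed.
End Dec.

Section DecQ.
Context {D : poGroup} {HD : is_pogroup D} {I : Type} {G : I -> poGroup} {HG : forall i, is_pogroup (G i)}.
Variable phi : car D -> forall i, car (G i).
Hypothesis Hd : Decomp phi.

Local Notation mkD := (qmk D (@Qsub D)).
Local Notation mkG i := (qmk (G i) (@Qsub (G i))).

Definition phiQ (P : car (quot D (@Qsub D))) (i : I) : car (quot (G i) (@Qsub (G i))) :=
  mkG i (phi (qrep D (@Qsub D) P) i).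

Lemma phi_resp x y i : Qsub (add x (opp y)) -> Qsub (add (phi x i) (opp (phi y i))).
Proof. move=> h. rewrite -(d_sub _ Hd). by apply (proj1 (d_Qsub _ Hd _) h). Qed.

Lemma phiQ_mk a i : phiQ (mkD a) i = mkG i (phi a i).
Proof. unfold phiQ. apply (qmk_eq Sgen). apply phi_resp. apply (qrep_qmk Sgen). Qed.

Lemma decomp_quot : @Decomp (quot D (@Qsub D)) I (fun i => quot (G i) (@Qsub (G i))) phiQ.
Proof.
  have HQD := @Qquot_pogroup D HD.
  split.
  - move=> P R i. destruct (qmk_surj Sgen P) as [a ->]. destruct (qmk_surj Sgen R) as [b ->].
    rewrite (qadd_mk Sgen) !phiQ_mk (d_add _ Hd). by rewrite (qadd_mk Sgen).
  - move=> P R h. destruct (qmk_surj Sgen P) as [a ->]. destruct (qmk_surj Sgen R) as [b ->].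
    apply (qmk_eq Sgen). apply (d_Qsub _ Hd) => i. rewrite (d_sub _ Hd).
    apply (proj1 (qmk_eq Sgen _ _)). move: (h i). by rewrite !phiQ_mk.
  - move=> P. destruct (qmk_surj Sgen P) as [a ->]. destruct ((d_fin _ Hd) a) as [l hl].
    exists l => i ni. by rewrite phiQ_mk hl.
  - move=> F [l hl].
    pose f := fun i => match excluded_middle_informative (F i = zero) with
                       | left _ => zero | right _ => qrep (G i) (@Qsub (G i)) (F i) end.
    destruct ((d_surj _ Hd) f) as [x hx].
    { exists l => i ni. unfold f. destruct (excluded_middle_informative (F i = zero)) as [e|ne]; auto.
      case: ne. auto. }
    exists (mkD x) => i. rewrite phiQ_mk hx. unfold f.
    destruct (excluded_middle_informative (F i = zero)) as [e|ne].
    + by rewrite e.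
    + by rewrite -(qmk_rep Sgen).
  - move=> P R. destruct (qmk_surj Sgen P) as [a ->]. destruct (qmk_surj Sgen R) as [b ->].
    split.
    + move=> /(qle_mk Sgen) [al [be [ha [hb hab]]]] i. rewrite !phiQ_mk.
      apply (qle_mk Sgen). exists (phi al i), (phi be i). split; [|split].
      * by apply phi_resp. * by apply phi_resp. * by apply (d_le _ Hd).
    + move=> h. set d := add b (opp a). destruct ((d_fin _ Hd) d) as [l hl].
      have hc : forall i, exists c : car (G i), pos c /\ Qsub (add (phi d i) (opp c)) /\ (~ In i l -> c = zero).
      { move=> i. destruct (classic (In i l)) as [il|nil].
        - move: (h i). rewrite !phiQ_mk. move=> /(qle_mk Sgen) [al [be [ha [hb hab]]]].
          exists (add be (opp al)). split; [|split].
          + by apply le_pos.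
          + rewrite /d (d_sub _ Hd). apply (gen_addc Sgen).
            * by apply (gen_sym Sgen).
            * apply (gen_oppc Sgen). by apply (gen_sym Sgen).
          + by [].
        - exists zero. split; [|split]. apply pos0. rewrite hl // subrr. apply gen_zero. by []. }
      have [c hcc] : exists c : forall i, car (G i), forall i, pos (c i) /\ Qsub (add (phi d i) (opp (c i))) /\ (~ In i l -> c i = zero).
      { exists (fun i => proj1_sig (constructive_indefinite_description _ (hc i))).
        move=> i. exact (proj2_sig (constructive_indefinite_description _ (hc i))). }
      destruct ((d_surj _ Hd) c) as [x hx].
      { exists l => i ni. by apply (proj2 (proj2 (hcc i))). }
      have px : pos x. { apply (d_pos _ Hd) => i. rewrite hx. apply hcc. }
      have qx : Qsub (add d (opp x)). { apply (d_Qsub _ Hd) => i. rewrite (d_sub _ Hd) hx. apply hcc. }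
      apply (qle_mk Sgen). exists a, (add a x). split; [|split].
      * apply (gen_refl Sgen).
      * have e : add (add a x) (opp b) = opp (add d (opp x)).
        { rewrite opp_sub /d opp_sub addA (addC x a). reflexivity. }
        rewrite e. by apply gen_opp.
      * by apply le_add_pos.
Qed.
End DecQ.

Lemma dsum_pogroup (I : Type) (G : I -> poGroup) (HG : forall i, is_pogroup (G i)) : is_pogroup (dsum I G HG).
Proof.
  have ext : forall f g : car (dsum I G HG), (forall i, proj1_sig f i = proj1_sig g i) -> f = g.
  { move=> [f hf] [g hg] /= e. have ee : f = g by apply functional_extensionality_dep.
    subst g. f_equal. apply proof_irrelevance. }
  repeat split.
  - move=> x y z. apply ext => i /=. apply addA.
  - move=> x y. apply ext => i /=. apply addC.
  - move=> x. apply ext => i /=. apply add0l.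
  - move=> x. apply ext => i /=. apply addNl.
  - move=> x i. apply le_refl.
  - move=> x y h1 h2. apply ext => i. by apply le_anti.
  - move=> x y z h1 h2 i. by apply (le_trans _ (proj1_sig y i)).
  - move=> x y z h i /=. by apply le_add.
Qed.

Lemma decomp_dsum (I : Type) (G : I -> poGroup) (HG : forall i, is_pogroup (G i)) :
  @Decomp (dsum I G HG) I G (fun f => proj1_sig f).
Proof. split.
  - by [].
  - move=> [f hf] [g hg] /= e. have ee : f = g by apply functional_extensionality_dep.
    subst g. f_equal. apply proof_irrelevance.
  - move=> [f [l hl]]. by exists l.
  - move=> f hf. by exists (exist _ f hf).
  - by [].
Qed.

Lemma decomp_qseq (I : Type) (G : I -> poGroup) (HG : forall i, is_pogroup (G i)) m :
  exists phi, @Decomp (qseq (dsum I G HG) m) I (fun i => qseq (G i) m) phi.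
Proof. elim: m => [|m [phi IH]].
  - exists (fun f => proj1_sig f). apply decomp_dsum.
  - exists (phiQ phi). simpl.
    have HD := qseq_pogroup _ (dsum_pogroup I G HG) m.
    have HGm : forall i, is_pogroup (qseq (G i) m) by move=> i; apply qseq_pogroup.
    by apply decomp_quot.
Qed.

Section Prop1.
Context {H : poGroup} {HH : is_pogroup H}.
Local Notation mk := (qmk H (@Qsub H)).

Lemma triv_quot : trivial H -> trivial (quot H (@Qsub H)).
Proof. move=> t P. rewrite (qmk_rep Sgen P) (t (qrep _ _ P)). reflexivity. Qed.

Lemma nontriv_quot : zero_sub H (@Qsub H) -> ~ trivial H -> ~ trivial (quot H (@Qsub H)).
Proof. move=> z nt t. apply nt => x. have e := t (mk x).
  have : Qsub (add x (opp zero)) by apply (proj1 (qmk_eq Sgen _ _)).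
  move=> /z. rewrite opp0 add0r. by []. Qed.

Lemma zsub_quot : zero_sub H (@Qsub H) -> zero_sub (quot H (@Qsub H)) (@Qsub (quot H (@Qsub H))).
Proof. move=> z.
  have HQ := @Qquot_pogroup H HH.
  have eqz : forall a b, mk a = mk b -> a = b.
  { move=> a b e. apply sub_eq0. apply z. by apply (proj1 (qmk_eq Sgen _ _)). }
  have rq : forall a, qrep H Qsub (mk a) = a.
  { move=> a. apply sub_eq0. apply z. apply (qrep_qmk Sgen). }
  have Hd : @Decomp (quot H (@Qsub H)) unit (fun _ => H) (fun P _ => qrep H (@Qsub H) P).
  { split.
    - move=> P R _ /=. by rewrite rq.
    - move=> P R e. by rewrite (qmk_rep Sgen P) (qmk_rep Sgen R) (e tt).
    - move=> P. exists (tt :: nil) => i ni. case: ni. case: i. by left.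
    - move=> f _. exists (mk (f tt)) => i. case: i. by rewrite rq.
    - move=> P R. split.
      + rewrite {1}(qmk_rep Sgen P) {1}(qmk_rep Sgen R).
        move=> /(qle_mk Sgen) [al [be [ha [hb hab]]]] _.
        have e1 := z _ ha. have e2 := z _ hb. apply sub_eq0 in e1. apply sub_eq0 in e2.
        by rewrite -e1 -e2.
      + move=> h. rewrite (qmk_rep Sgen P) (qmk_rep Sgen R). apply (qle_mk_intro Sgen). apply (h tt). }
  apply (proj2 (d_zsub _ Hd)) => _. exact z.
Qed.
End Prop1.

Lemma triv_fwd (H : poGroup) (HH : is_pogroup H) m k : m <= k -> trivial (qseq H m) -> trivial (qseq H k).
Proof. elim: k => [|k IH] hk t.
  - inversion hk; subst. exact t.
  - inversion hk; subst. exact t. simpl. have := qseq_pogroup H HH k => Hk.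
    apply triv_quot. by apply IH.
Qed.

Lemma C_fwd (H : poGroup) (HH : is_pogroup H) m k : m <= k ->
  (~ trivial (qseq H m) /\ zero_sub (qseq H m) (@Qsub (qseq H m))) ->
  (~ trivial (qseq H k) /\ zero_sub (qseq H k) (@Qsub (qseq H k))).
Proof. elim: k => [|k IH] hk t.
  - inversion hk; subst. exact t.
  - inversion hk; subst. exact t. simpl. have := qseq_pogroup H HH k => Hk.
    destruct (IH H1 t) as [a b]. split. by apply nontriv_quot. by apply zsub_quot.
Qed.

Lemma T_iff (I : Type) (G : I -> poGroup) (HG : forall i, is_pogroup (G i)) m :
  trivial (qseq (dsum I G HG) m) <-> forall i, trivial (qseq (G i) m).
Proof. destruct (decomp_qseq I G HG m) as [phi Hd].
  have HD := qseq_pogroup _ (dsum_pogroup I G HG) m.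
  have HGm : forall i, is_pogroup (qseq (G i) m) by move=> i; apply qseq_pogroup.
  exact (d_trivial _ Hd). Qed.

Lemma Z_iff (I : Type) (G : I -> poGroup) (HG : forall i, is_pogroup (G i)) m :
  zero_sub _ (@Qsub (qseq (dsum I G HG) m)) <-> forall i, zero_sub _ (@Qsub (qseq (G i) m)).
Proof. destruct (decomp_qseq I G HG m) as [phi Hd].
  have HD := qseq_pogroup _ (dsum_pogroup I G HG) m.
  have HGm : forall i, is_pogroup (qseq (G i) m) by move=> i; apply qseq_pogroup.
  exact (d_zsub _ Hd). Qed.

Theorem corollary4p9 (I : Type) (G : I -> poGroup)
  (HG : forall i, is_pogroup (G i)) (n : I -> nat) (N : nat)
  (HN : is_sup n N) :
  ((forall i, n_atomic (G i) (n i)) -> n_atomic (@dsum I G HG) N) /\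
  (inhabited I -> (forall i, n_antimatter (G i) (n i)) ->
     n_antimatter (@dsum I G HG) N).
Proof.
  destruct HN as [HN1 HN2]. split.
  - move=> hat. split.
    + move=> m hm. apply T_iff => i. apply (proj1 (hat i)). apply (Nat.le_trans _ N); auto.
    + move=> k hk. apply HN2 => i. apply (proj2 (hat i)) => m hm. by apply (proj1 (T_iff I G HG m) (hk m hm)).
  - move=> [i0] ham.
    have CN : forall i, ~ trivial (qseq (G i) N) /\ zero_sub _ (@Qsub (qseq (G i) N)).
    { move=> i. apply (C_fwd _ (HG i) (n i)); auto. apply (proj1 (ham i)). }
    split.
    + split.
      * move=> /T_iff t. apply (proj1 (CN i0)). apply t.
      * apply Z_iff => i. apply (CN i).
    + move=> k [nt z]. apply HN2 => i.
      destruct (le_lt_dec (n i) k) as [l|l]; auto.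
      apply (proj2 (ham i)). split.
      * move=> t. apply (proj1 (proj1 (ham i))). apply (triv_fwd _ (HG i) k); auto. by apply Nat.lt_le_incl.
      * by apply (proj1 (Z_iff I G HG k) z).
Qed.
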